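(* Given a neural network $f$ and an input $\mathbf{x} = \langle x_1, \ldots, x_m \rangle$ where $m \geq 2$, the time complexity of $\textsc{qXp}(\emptyset, \emptyset, \mathbf{x})$ is $\lfloor \log_2 m \rfloor + 1$ calls of $\textsc{checkValid}$ for the best case (all features are irrelevant) and $(m-1) \times 2$ calls of $\textsc{checkValid}$ for the worst case (all features are in explanation). When $m = 1$, it needs $1$ $\textsc{checkValid}$ call.
   Context: $f$ is a neural network (classifier or regressor), $\mathbf{x}$ an input with $m$ features, $\epsilon$ a perturbation magnitude and $p$ a norm. The oracle $\textsc{checkValid}(f, \mathbf{x}, \mathbf{x}_S)$ returns True iff every input obtained from $\mathbf{x}$ by perturbing the features in $\mathbf{x}_S$ within $\epsilon$ (in $p$-norm) while keeping all other features fixed yields the same prediction as $\mathbf{x}$ (same class, or output within $\delta$ for regression); such features are irrelevant, the others form the explanation. The recursive function $\textsc{qXp}(\mathbf{x}_\alpha, \mathbf{x}_\beta, \mathbf{x}_\Theta)$ (current explanation, current irrelevant set, features still to analyze) returns a pair (explanation features, irrelevant set) and does: if $|\mathbf{x}_\Theta|=1$, return $(\emptyset, \mathbf{x}_\beta\cup\mathbf{x}_\Theta)$ if $\textsc{checkValid}(f,\mathbf{x},\mathbf{x}_\beta\cup\mathbf{x}_\Theta)$ is True, else $(\mathbf{x}_\Theta,\mathbf{x}_\beta)$. Otherwise split $\mathbf{x}_\Theta$ into halves $\mathbf{x}_\Phi,\mathbf{x}_\Psi$ (with $|\mathbf{x}_\Phi|=|\mathbf{x}_\Psi|+1$ when odd).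 If $\textsc{checkValid}(f,\mathbf{x},\mathbf{x}_\beta\cup\mathbf{x}_\Phi)$ is True, return $\textsc{qXp}(\mathbf{x}_\alpha,\mathbf{x}_\beta\cup\mathbf{x}_\Phi,\mathbf{x}_\Psi)$; else if $\textsc{checkValid}(f,\mathbf{x},\mathbf{x}_\beta\cup\mathbf{x}_\Psi)$ is True, return $\textsc{qXp}(\mathbf{x}_\alpha,\mathbf{x}_\beta\cup\mathbf{x}_\Psi,\mathbf{x}_\Phi)$; else: if $|\mathbf{x}_\Phi|=1$ set $(\mathbf{x}_\Phi',\mathbf{x}_\beta')=(\mathbf{x}_\Phi,\mathbf{x}_\beta)$, otherwise $(\mathbf{x}_\Phi',\mathbf{x}_\beta')=\textsc{qXp}(\mathbf{x}_\alpha\cup\mathbf{x}_\Psi,\mathbf{x}_\beta,\mathbf{x}_\Phi)$; if $|\mathbf{x}_\Psi|=1$ set $(\mathbf{x}_\Psi',\mathbf{x}_\beta'')=(\mathbf{x}_\Psi,\mathbf{x}_\beta')$, otherwise $(\mathbf{x}_\Psi',\mathbf{x}_\beta'')=\textsc{qXp}(\mathbf{x}_\alpha\cup\mathbf{x}_\Phi',\mathbf{x}_\beta',\mathbf{x}_\Psi)$; return $(\mathbf{x}_\Phi'\cup\mathbf{x}_\Psi',\mathbf{x}_\beta'')$. *)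

(* Defs.v *)
From mathcomp Require Import all_boot all_order all_algebra.
Set Implicit Arguments. Unset Strict Implicit. Unset Printing Implicit Defensive.
Import Order.TTheory GRing.Theory Num.Theory.
Local Open Scope ring_scope.

(* checkValid f x S : every input x' obtained from x by perturbing only the
   features in S (all other features fixed) with ||x' - x|| <= eps yields the
   same prediction as x.  [nrm] is the chosen p-norm (kept abstract: any
   function works) and [same] is the prediction-equivalence relation
   (equal class for classifiers, |y - y'| <= delta for regressors). *)
Definition checkValid (R : realFieldType) (Y : Type) (m : nat)
  (same : Y -> Y -> Prop) (nrm : ('I_m -> R) -> R) (eps : R)
  (f : ('I_m -> R) -> Y) (x : 'I_m -> R) (S : seq 'I_m) : Prop :=
  forall x' : 'I_m -> R,
    (forall i, i \notin S -> x' i = x i) ->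
    nrm (fun i => x' i - x i) <= eps ->
    same (f x') (f x).

(* The recursive procedure qXp, instrumented to count calls to the oracle
   [cv] (the boolean checkValid).  Feature sets are sequences; union is
   concatenation; x_Phi is the first ceil(n/2) features of x_Theta.
   Result: ((explanation, irrelevant set), number of checkValid calls).
   [fuel] only ensures termination; [qXp] supplies fuel = size Theta, which
   is always sufficient since both halves are strictly smaller. *)
Fixpoint qXp_fuel (T : Type) (cv : seq T -> bool) (fuel : nat)
  (a b t : seq T) : (seq T * seq T) * nat :=
  match fuel with
  | 0 => ((t, b), 0%N)
  | fuel'.+1 =>
    if size t == 1%N then
      (if cv (b ++ t) then (([::], b ++ t), 1%N) else ((t, b), 1%N))
    else
      let phi := take (uphalf (size t)) t in
      let psi := drop (uphalf (size t)) t in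
      if cv (b ++ phi) then
        let r := qXp_fuel cv fuel' a (b ++ phi) psi in (r.1, (r.2 + 1)%N)
      else if cv (b ++ psi) then
        let r := qXp_fuel cv fuel' a (b ++ psi) phi in (r.1, (r.2 + 2)%N)
      else
        let r1 := if size phi == 1%N then ((phi, b), 0%N)
                  else qXp_fuel cv fuel' (a ++ psi) b phi in
        let phi' := r1.1.1 in let b' := r1.1.2 in
        let r2 := if size psi == 1%N then ((psi, b'), 0%N)
                  else qXp_fuel cv fuel' (a ++ phi') b' psi in
        let psi' := r2.1.1 in let b'' := r2.1.2 in
        ((phi' ++ psi', b''), (r1.2 + r2.2 + 2)%N)
  end.

Definition qXp (T : Type) (cv : seq T -> bool) (a b t : seq T) :=
  qXp_fuel cv (size t) a b t.

Definition qXp_calls (m : nat) (cv : seq 'I_m -> bool) : nat :=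
  (qXp cv [::] [::] (enum 'I_m)).2.

(* Main.v *)
Require Import Defs.
From mathcomp Require Import all_boot all_order all_algebra.
From mathcomp Require Import zify.
Import Order.TTheory GRing.Theory Num.Theory.
Local Open Scope ring_scope.

Lemma half_facts (n : nat) : exists o h : nat,
  [/\ (o <= 1)%N, n = (o + 2 * h)%N, uphalf n = (o + h)%N & n./2 = h].
Proof.
exists (odd n), n./2; split; first by case: (odd n).
- by rewrite mul2n odd_double_half.
- by rewrite uphalf_half.
- by [].
Qed.

Lemma best_case (T : Type) (cv : seq T -> bool) (cvT : forall S, cv S = true) :
  forall fuel a b t, (0 < size t <= fuel)%N ->
  (qXp_fuel cv fuel a b t).2 = (trunc_log 2 (size t) + 1)%N.
Proof.
elim=> [|fuel IH] a b t /andP [H0 H1] /=; first by lia.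
case: eqP => [->|Hn]; first by rewrite cvT trunc_log1.
rewrite cvT /= IH size_drop.
  have [o [h [Ho Hn' Hu Hh]]] := half_facts (size t).
  rewrite (trunc_log2S (n := size t)); last by lia.
  rewrite Hu Hh; have -> : (size t - (o + h) = h)%N by lia.
  by rewrite addn1 addn1 addn1.
have [o [h [Ho Hn' Hu Hh]]] := half_facts (size t).
rewrite Hu; apply/andP; split; lia.
Qed.

Lemma worst_case (T : Type) (cv : seq T -> bool)
  (cvF : forall S, S <> [::] -> cv S = false) :
  forall fuel a b t, (1 < size t <= fuel)%N ->
  (qXp_fuel cv fuel a b t).2 = ((size t - 1) * 2)%N.
Proof.
elim=> [|fuel IH] a b t /andP [H0 H1] /=; first by lia.
have [o [h [Ho Hn' Hu Hh]]] := half_facts (size t).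
case: eqP => [Hn|Hn]; first by lia.
set phi := take _ t; set psi := drop _ t.
have Sphi : size phi = (o + h)%N by rewrite /phi size_take Hu; case: ifP; lia.
have Spsi : size psi = h by rewrite /psi size_drop Hu; lia.
rewrite cvF; last by case: (b) phi Sphi => [|? ?] [|? ?] //=; lia.
rewrite cvF; last by case: (b) psi Spsi => [|? ?] [|? ?] //=; lia.
have E1 : forall a' b', (if size phi == 1%N then ((phi, b'), 0%N)
      else qXp_fuel cv fuel a' b' phi).2 = ((size phi - 1) * 2)%N.
  move=> a' b'; case: eqP => [->//|?]; rewrite IH //; apply/andP; split; lia.
have E2 : forall a' b', (if size psi == 1%N then ((psi, b'), 0%N)
      else qXp_fuel cv fuel a' b' psi).2 = ((size psi - 1) * 2)%N.
  move=> a' b'; case: eqP => [->//|?]; rewrite IH //; apply/andP; split; lia.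
rewrite /= E1 E2 Sphi Spsi; lia.
Qed.

Theorem theorem2 (R : realFieldType) (Y : Type) (same : Y -> Y -> Prop)
  (m : nat) (nrm : ('I_m -> R) -> R) (eps : R)
  (f : ('I_m -> R) -> Y) (x : 'I_m -> R) (cv : seq 'I_m -> bool)
  (cvP : forall S : seq 'I_m, cv S = true <-> checkValid same nrm eps f x S) :
  [/\ (2 <= m)%N ->
        checkValid same nrm eps f x (enum 'I_m) ->
        qXp_calls cv = (trunc_log 2 m + 1)%N,
      (2 <= m)%N ->
        (forall i : 'I_m, ~ checkValid same nrm eps f x [:: i]) ->
        qXp_calls cv = ((m - 1) * 2)%N
    & m = 1%N -> qXp_calls cv = 1%N].
Proof.
split.
- move=> Hm Hall; rewrite /qXp_calls /qXp best_case ?size_enum_ord //.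
    move=> S; apply/cvP => x' _ Hn; apply: Hall => // i; by rewrite mem_enum.
  by apply/andP; split; lia.
- move=> Hm Hno; rewrite /qXp_calls /qXp worst_case ?size_enum_ord //.
    move=> S HS; apply/negP => /cvP HcS.
    case: S HS HcS => [//|i S] _ HcS; apply: (Hno i) => x' Hfix Hn.
    apply: HcS => // j Hj; apply: Hfix; rewrite inE; apply/eqP => Eji.
    by move: Hj; rewrite Eji inE eqxx.
  by apply/andP; split; lia.
- move=> Hm; subst m; rewrite /qXp_calls /qXp size_enum_ord /=.
  by rewrite size_enum_ord /=; case: (cv _).
Qed.
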